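(* For every $d\in\mathbb N$, the Hamming graph $H(d,3)$ has no quantum symmetry, i.e. $C(G_{aut}^+(H(d,3)))$ is commutative.
   Context: The Hamming graph $H(d,q)$ has vertex set $\{1,\dots,q\}^d$, two vertices being adjacent iff they differ in exactly one coordinate. For a finite simple undirected graph $\Gamma=(V,E)$ with $V=\{1,\dots,n\}$, $C(G_{aut}^+(\Gamma))$ is the universal unital $C^*$-algebra generated by $u_{ij}$, $1\le i,j\le n$, with relations: (R1) $u_{ij}=u_{ij}^*=u_{ij}^2$; (R2) $\sum_{l} u_{il}=1=\sum_{l} u_{li}$ for all $i$; (R3) $u_{ij}u_{kl}=u_{kl}u_{ij}=0$ whenever exactly one of $(i,k)\in E$, $(j,l)\in E$ holds. $\Gamma$ has no quantum symmetry if $C(G_{aut}^+(\Gamma))$ is commutative. *)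

(* Defs.v *)
From Stdlib Require Import Reals.
From mathcomp Require Import all_boot.
Set Implicit Arguments. Unset Strict Implicit. Unset Printing Implicit Defensive.

Record Cplx := mkC { Cre : R; Cim : R }.
Definition C0 : Cplx := mkC R0 R0.
Definition C1 : Cplx := mkC R1 R0.
Definition Cadd (a b : Cplx) : Cplx := mkC (Rplus (Cre a) (Cre b)) (Rplus (Cim a) (Cim b)).
Definition Cmul (a b : Cplx) : Cplx :=
  mkC (Rminus (Rmult (Cre a) (Cre b)) (Rmult (Cim a) (Cim b)))
      (Rplus (Rmult (Cre a) (Cim b)) (Rmult (Cim a) (Cre b))).
Definition Cconj (a : Cplx) : Cplx := mkC (Cre a) (Ropp (Cim a)).
Definition Cmod (a : Cplx) : R := sqrt (Rplus (Rmult (Cre a) (Cre a)) (Rmult (Cim a) (Cim a))).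

Record CStarAlgebra := {
  cs_car :> Type;
  cs_zero : cs_car;
  cs_one : cs_car;
  cs_add : cs_car -> cs_car -> cs_car;
  cs_opp : cs_car -> cs_car;
  cs_mul : cs_car -> cs_car -> cs_car;
  cs_scal : Cplx -> cs_car -> cs_car;
  cs_star : cs_car -> cs_car;
  cs_norm : cs_car -> R;
  cs_addA : forall x y z, cs_add x (cs_add y z) = cs_add (cs_add x y) z;
  cs_addC : forall x y, cs_add x y = cs_add y x;
  cs_add0 : forall x, cs_add x cs_zero = x;
  cs_addN : forall x, cs_add x (cs_opp x) = cs_zero;
  cs_scalDl : forall a b x, cs_scal (Cadd a b) x = cs_add (cs_scal a x) (cs_scal b x);
  cs_scalDr : forall a x y, cs_scal a (cs_add x y) = cs_add (cs_scal a x) (cs_scal a y);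
  cs_scalA : forall a b x, cs_scal (Cmul a b) x = cs_scal a (cs_scal b x);
  cs_scal1 : forall x, cs_scal C1 x = x;
  cs_mulA : forall x y z, cs_mul x (cs_mul y z) = cs_mul (cs_mul x y) z;
  cs_mul1l : forall x, cs_mul cs_one x = x;
  cs_mul1r : forall x, cs_mul x cs_one = x;
  cs_mulDl : forall x y z, cs_mul (cs_add x y) z = cs_add (cs_mul x z) (cs_mul y z);
  cs_mulDr : forall x y z, cs_mul x (cs_add y z) = cs_add (cs_mul x y) (cs_mul x z);
  cs_scal_mull : forall a x y, cs_mul (cs_scal a x) y = cs_scal a (cs_mul x y);
  cs_scal_mulr : forall a x y, cs_mul x (cs_scal a y) = cs_scal a (cs_mul x y);
  cs_starK : forall x, cs_star (cs_star x) = x;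
  cs_starD : forall x y, cs_star (cs_add x y) = cs_add (cs_star x) (cs_star y);
  cs_starM : forall x y, cs_star (cs_mul x y) = cs_mul (cs_star y) (cs_star x);
  cs_starZ : forall a x, cs_star (cs_scal a x) = cs_scal (Cconj a) (cs_star x);
  cs_norm_eq0 : forall x, cs_norm x = R0 -> x = cs_zero;
  cs_normD : forall x y, Rle (cs_norm (cs_add x y)) (Rplus (cs_norm x) (cs_norm y));
  cs_normZ : forall a x, cs_norm (cs_scal a x) = Rmult (Cmod a) (cs_norm x);
  cs_normM : forall x y, Rle (cs_norm (cs_mul x y)) (Rmult (cs_norm x) (cs_norm y));
  cs_cstar : forall x, cs_norm (cs_mul (cs_star x) x) = Rmult (cs_norm x) (cs_norm x);
  cs_complete : forall s : nat -> cs_car,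
    (forall eps, Rlt R0 eps -> exists N, forall m n, (N <= m)%coq_nat -> (N <= n)%coq_nat ->
        Rlt (cs_norm (cs_add (s m) (cs_opp (s n)))) eps) ->
    exists l, forall eps, Rlt R0 eps -> exists N, forall n, (N <= n)%coq_nat ->
        Rlt (cs_norm (cs_add (s n) (cs_opp l))) eps
}.

Definition qaut_relations (V : finType) (E : rel V) (A : CStarAlgebra)
    (u : V -> V -> A) : Prop :=
  (forall i j, cs_star (u i j) = u i j /\ cs_mul (u i j) (u i j) = u i j) /\
  (forall i, \big[@cs_add A/cs_zero A]_(l : V) u i l = cs_one A /\
             \big[@cs_add A/cs_zero A]_(l : V) u l i = cs_one A) /\
  (forall i j k l, (E i k) (+) (E j l) ->
     cs_mul (u i j) (u k l) = cs_zero A /\ cs_mul (u k l) (u i j) = cs_zero A).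

(* Gamma has no quantum symmetry: the universal unital C*-algebra
   C(G_aut^+(Gamma)) generated by the u_ij subject to (R1)-(R3) is
   commutative.  By the universal property, this algebra is commutative
   iff its generators commute, iff in every unital C*-algebra A every
   family (u_ij) satisfying (R1)-(R3) consists of pairwise commuting
   elements. *)
Definition no_quantum_symmetry (V : finType) (E : rel V) : Prop :=
  forall (A : CStarAlgebra) (u : V -> V -> A), qaut_relations E u ->
    forall i j k l, cs_mul (u i j) (u k l) = cs_mul (u k l) (u i j).

Definition hamming_vertex (d q : nat) : finType := {ffun 'I_d -> 'I_q}.
Definition hamming_adj (d q : nat) : rel (hamming_vertex d q) :=
  fun x y => #|[set i : 'I_d | x i != y i]| == 1.
Arguments hamming_adj d q : clear implicits.

(* Main.v *)
Require Import Defs.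
From Stdlib Require Import Reals.
From mathcomp Require Import all_boot.
From HB Require Import structures.
From mathcomp Require Import all_algebra zify.
From mathcomp Require Import boolp.
Set Implicit Arguments. Unset Strict Implicit. Unset Printing Implicit Defensive.
Import GRing.Theory.
Section Graph.
Variable d : nat.
Local Notation V := (hamming_vertex d 3).
Local Notation E := (hamming_adj d 3).
Implicit Types x y z t s j l i k p : V.

Definition hdist x y : nat := \sum_(c : 'I_d) (x c != y c).
Definition off (c : 'I_d) x y : nat := \sum_(c' | c' != c) (x c' != y c').

Lemma adjE x y : E x y = (hdist x y == 1%N).
Proof.
rewrite /hamming_adj /hdist -sum1_card big_mkcond /=.
congr (_ == _); apply: eq_bigr => c _; rewrite inE; by case: (x c != y c).
Qed.

Lemma hdist_sym x y : hdist x y = hdist y x.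
Proof. by apply: eq_bigr => c _; rewrite eq_sym. Qed.

Lemma adj_sym x y : E x y = E y x.
Proof. by rewrite !adjE hdist_sym. Qed.

Lemma hdist_xx x : hdist x x = 0%N.
Proof. by rewrite /hdist big1 // => c _; rewrite eqxx. Qed.

Lemma adj_irr x : E x x = false.
Proof. by rewrite adjE hdist_xx. Qed.

Lemma hdist_split c x y : hdist x y = ((x c != y c) + off c x y)%N.
Proof. by rewrite /hdist (bigD1 c). Qed.

Lemma off_eql c x x' y : (forall c', c' != c -> x c' = x' c') -> off c x y = off c x' y.
Proof. by move=> h; apply: eq_bigr => c' hc; rewrite h. Qed.

Lemma off_eqr c x y y' : (forall c', c' != c -> y c' = y' c') -> off c x y = off c x y'.
Proof. by move=> h; apply: eq_bigr => c' hc; rewrite h. Qed.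

Lemma off0 c x y : off c x y = 0%N -> forall c', c' != c -> x c' = y c'.
Proof.
move=> h c' hc; apply/eqP; apply: negbNE; apply/negP => hne.
by move: h; rewrite /off (bigD1 c') //= hne.
Qed.

Lemma off_agree c x y : (forall c', c' != c -> x c' = y c') -> off c x y = 0%N.
Proof. by move=> h; rewrite /off big1 // => c' hc; rewrite h ?eqxx. Qed.

Lemma hdist_pos x y : (0 < hdist x y)%N -> exists c, x c != y c.
Proof.
case: (pickP (fun c => x c != y c)) => [c hc _|h]; first by exists c.
by rewrite /hdist big1 // => c _; move/negbT: (h c) => /negbNE ->.
Qed.

Lemma dist0 x y : hdist x y = 0%N -> x = y.
Proof.
move=> h; apply/ffunP => c; apply/eqP; apply: negbNE; apply/negP => hne.
by move: h; rewrite (hdist_split c) hne.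
Qed.

Lemma adj_off x y : E x y -> exists c, x c != y c /\ forall c', c' != c -> x c' = y c'.
Proof.
rewrite adjE => /eqP h.
have [c hc] : exists c, x c != y c by apply: hdist_pos; rewrite h.
exists c; split => //; apply: off0.
by move: h; rewrite (hdist_split c) hc => -[].
Qed.

Definition upd x c (v : 'I_3) : V := [ffun c' => if c' == c then v else x c'].

Lemma upd_at x c v : upd x c v c = v.
Proof. by rewrite /upd ffunE eqxx. Qed.
Lemma upd_off x c v c' : c' != c -> upd x c v c' = x c'.
Proof. by move=> h; rewrite /upd ffunE (negbTE h). Qed.

Lemma hdist_upd x c v y : hdist (upd x c v) y = ((v != y c) + off c x y)%N.
Proof.
rewrite (hdist_split c) upd_at; congr (_ + _)%N; apply: off_eql => c' h.
by rewrite upd_off.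
Qed.

Lemma hdist_upd_self x c v : hdist (upd x c v) x = (v != x c).
Proof. by rewrite hdist_upd (off_agree (x:=x) (y:=x)) ?addn0. Qed.

Lemma adj_hdist_le t j l : E t j -> (hdist j l <= (hdist t l).+1)%N.
Proof.
move=> /adj_off [c [hc ho]].
rewrite (hdist_split c j) (hdist_split c t) (off_eql (x:=t) (x':=j) _ ho).
case: (j c != l c); case: (t c != l c) => /=; lia.
Qed.

Lemma geodesic i k n : hdist i k = n.+1 -> exists p, E i p /\ hdist p k = n.
Proof.
move=> h; have [c hc] : exists c, i c != k c by apply: hdist_pos; rewrite h.
exists (upd i c (k c)); split.
  by rewrite adj_sym adjE hdist_upd_self (eq_sym (k c)) hc.
by move: h; rewrite hdist_upd eqxx (hdist_split c) hc => -[].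
Qed.

Lemma two_steps i k m : hdist i k = m -> (2 <= m)%N ->
  exists p1 p2, [/\ E i p1, E i p2, hdist p1 k = m.-1, hdist p2 k = m.-1 & hdist p1 p2 = 2%N].
Proof.
move=> h hm; have [c1 hc1] : exists c, i c != k c by apply: hdist_pos; rewrite h; lia.
have ho : off c1 i k = m.-1 by move: h; rewrite (hdist_split c1) hc1 => <-.
have [c2 hc2] : exists c, (c != c1) && (i c != k c).
  case: (pickP (fun c => (c != c1) && (i c != k c))) => [c hc|hn]; first by exists c.
  move: ho; rewrite /off big1 => [|c hc]; first by lia.
  by have := hn c; rewrite hc /= => /negbT/negbNE/eqP->; rewrite eqxx.
move/andP: hc2 => [hc21 hc2].
exists (upd i c1 (k c1)), (upd i c2 (k c2)); split.
- by rewrite adj_sym adjE hdist_upd_self (eq_sym (k c1)) hc1.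
- by rewrite adj_sym adjE hdist_upd_self (eq_sym (k c2)) hc2.
- by rewrite hdist_upd eqxx.
- rewrite hdist_upd eqxx; move: h; rewrite (hdist_split c2) hc2 /=; lia.
- have n12 : c1 != c2 by rewrite eq_sym.
  rewrite hdist_upd (upd_off _ _ n12) (eq_sym (k c1)) hc1.
  have : hdist i (upd i c2 (k c2)) = 1%N by rewrite hdist_sym hdist_upd_self (eq_sym (k c2)) hc2.
  rewrite (hdist_split c1) (upd_off _ _ n12) eqxx /=; lia.
Qed.

Definition third (a b : 'I_3) : 'I_3 := inord (3 - a - b).
Lemma third_neq (a b : 'I_3) : a != b -> (third a b != a) /\ (third a b != b).
Proof.
move=> hab; have ha := ltn_ord a; have hb := ltn_ord b.
move: hab; rewrite -(inj_eq val_inj) /= => hab.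
rewrite -!(inj_eq val_inj) /third /= inordK; lia.
Qed.
Lemma uniq3 (a b x y : 'I_3) : a != b -> x != a -> x != b -> y != a -> y != b -> x = y.
Proof.
have ha := ltn_ord a; have hb := ltn_ord b; have hx := ltn_ord x; have hy := ltn_ord y.
rewrite -!(inj_eq val_inj) /= => h1 h2 h3 h4 h5; apply/val_inj => /=; lia.
Qed.

Lemma common_nb x y : E x y -> exists z, E x z /\ E y z.
Proof.
move=> /adj_off [c [hc ho]].
have [h1 h2] := third_neq hc.
exists (upd x c (third (x c) (y c))); split.
  by rewrite adj_sym adjE hdist_upd_self h1.
rewrite adj_sym adjE hdist_upd h2 off_agree //.
Qed.

Lemma cn_shape x y t : E x y -> E t x -> E t y -> exists c,
  [/\ x c != y c, forall c', c' != c -> x c' = y c', t c != x c, t c != y c &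
      forall c', c' != c -> t c' = x c'].
Proof.
move=> /adj_off [c [hc ho]] htx hty; exists c.
have ex : off c t y = off c t x by apply: off_eqr => c' h; rewrite ho.
move: htx hty; rewrite !adjE (hdist_split c t x) (hdist_split c t y) ex.
case e1: (t c != x c); case e2: (t c != y c) => /= /eqP h1 /eqP h2.
- split => //; apply: off0; lia.
- lia.
- lia.
- move/negbT/negbNE/eqP: e1 => e1; move/negbT/negbNE/eqP: e2 => e2.
  by move: hc; rewrite -e1 -e2 eqxx.
Qed.

Lemma ucn x y t t' : E x y -> E t x -> E t y -> E t' x -> E t' y -> t = t'.
Proof.
move=> hxy h1 h2 h3 h4.
have [c [hc ho a1 a2 a3]] := cn_shape hxy h1 h2.
have [c' [hc' ho' b1 b2 b3]] := cn_shape hxy h3 h4.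
have ecc : c' = c.
  apply/eqP; apply: negbNE; apply/negP => hne.
  by move: hc'; rewrite ho // eqxx.
subst c'.
apply/ffunP => e; case: (eqVneq e c) => [->|he].
  exact: uniq3 hc a1 a2 b1 b2.
by rewrite a3 // b3.
Qed.

Lemma nb_separate x y : x != y -> exists t, E x t != E y t.
Proof.
move=> hxy; case hE: (E x y).
  by exists y; rewrite hE adj_irr.
have hd : hdist x y != 1%N by rewrite -adjE hE.
have [c hc] : exists c, x c != y c.
  apply: hdist_pos; case: (posnP (hdist x y)) => // /dist0 h; by rewrite h eqxx in hxy.
have [h1 h2] := third_neq hc.
exists (upd x c (third (x c) (y c))).
rewrite adj_sym adjE hdist_upd_self h1 /= adj_sym adjE hdist_upd h2.
by move: hd; rewrite (hdist_split c) hc.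
Qed.

Lemma CL m j l s t t' : hdist j l = m -> hdist s l = m -> (2 <= m)%N ->
  E t j -> E t s -> E t' j -> E t' s -> hdist t l = m.-1 -> hdist t' l = m.-1 ->
  hdist t t' = 2%N -> s = j.
Proof.
move=> hjl hsl hm /adj_off [c [hc ho]] hts /adj_off [c' [hc' ho']] hts' htl ht'l htt'.
have [tc jc] : t c = l c /\ j c != l c.
  move: htl; rewrite (hdist_split c t) (off_eql (x:=t) (x':=j)) //.
  move: hjl; rewrite (hdist_split c j).
  case: (t c =P l c) => [-> |_]; case: (j c =P l c) => [e|/eqP ne] /=; try lia.
  by move=> _ _.
have [tc' jc'] : t' c' = l c' /\ j c' != l c'.
  move: ht'l; rewrite (hdist_split c' t') (off_eql (x:=t') (x':=j)) //.
  move: hjl; rewrite (hdist_split c' j).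
  case: (t' c' =P l c') => [-> |_]; case: (j c' =P l c') => [e|/eqP ne] /=; try lia.
  by move=> _ _.
have ncc : c != c'.
  apply/negP => /eqP ecc; subst c'.
  have : t = t'.
    apply/ffunP => e; case: (eqVneq e c) => [->|he]; first by rewrite tc tc'.
    by rewrite ho // ho'.
  by move=> ett; move: htt'; rewrite ett hdist_xx.
have tc'_ : t c' = j c' by rewrite ho // eq_sym.
have t'c_ : t' c = j c by rewrite ho'.
have [e [he hoe]] := adj_off hts.
have [e' [he' hoe']] := adj_off hts'.
have H1 : (e == c) || (e' == c).
  case: (eqVneq e c) => [_|n1] //.
  case: (eqVneq e' c) => [_|n2]; first by rewrite orbT.
  exfalso.
  have := hoe c; rewrite eq_sym => /(_ n1) a.
  have := hoe' c; rewrite eq_sym => /(_ n2) b.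
  by move: jc; rewrite -t'c_ b -a tc eqxx.
have H2 : (e == c') || (e' == c').
  case: (eqVneq e c') => [_|n1] //.
  case: (eqVneq e' c') => [_|n2]; first by rewrite orbT.
  exfalso.
  have := hoe c'; rewrite eq_sym => /(_ n1) a.
  have := hoe' c'; rewrite eq_sym => /(_ n2) b.
  by move: jc'; rewrite -tc'_ a -b tc' eqxx.
case/orP: H1 => /eqP H1.
- subst e.
  have ee' : e' = c' by case/orP: H2 => /eqP // H2; move: ncc; rewrite H2 eqxx.
  subst e'.
  apply/ffunP => x; case: (eqVneq x c) => [->|hx].
    by rewrite -(hoe' c ncc) t'c_.
  by rewrite -(hoe x hx) (ho x hx).
- subst e'. (* e' = c, so e = c' : s = l at c, c' -> contradiction *)
  have ee : e = c' by case/orP: H2 => /eqP // H2; move: ncc; rewrite H2 eqxx.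
  subst e.
  exfalso.
  have sc' : s c' = l c'.
    have nc' : c' != c by rewrite eq_sym.
    by rewrite -tc' (hoe' c' nc').
  have e1 : hdist s l = off c' t l.
    rewrite (hdist_split c') sc' eqxx add0n.
    apply: off_eql => x hx; rewrite hoe //.
  have e2 : hdist t l = (1 + off c' t l)%N.
    by rewrite (hdist_split c') tc'_ jc'.
  move: hsl htl; rewrite e1 e2; lia.
Qed.

End Graph.

Definition car (A : CStarAlgebra) : Type := cs_car A.
HB.instance Definition _ (A : CStarAlgebra) := gen_eqMixin (car A).
HB.instance Definition _ (A : CStarAlgebra) := gen_choiceMixin (car A).
Section S.
Variable A : CStarAlgebra.
Lemma add0r_cs : left_id (cs_zero A) (@cs_add A).
Proof. by move=> x; rewrite cs_addC cs_add0. Qed.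
Lemma addNr_cs : left_inverse (cs_zero A) (@cs_opp A) (@cs_add A).
Proof. by move=> x; rewrite cs_addC cs_addN. Qed.
Lemma addA_cs : associative (@cs_add A). Proof. exact: cs_addA. Qed.
Lemma mulA_cs : associative (@cs_mul A). Proof. exact: cs_mulA. Qed.
End S.
HB.instance Definition _ (A : CStarAlgebra) := @GRing.isPzRing.Build (car A)
  (cs_zero A) (@cs_opp A) (@cs_add A) (cs_one A) (@cs_mul A)
  (@addA_cs A) (@cs_addC A) (@add0r_cs A) (@addNr_cs A) (@mulA_cs A)
  (@cs_mul1l A) (@cs_mul1r A) (@cs_mulDl A) (@cs_mulDr A).

Local Open Scope ring_scope.

Section Star.
Variable A : CStarAlgebra.
Definition st (x : car A) : car A := cs_star x.
Lemma stM (x y : car A) : st (x * y) = st y * st x. Proof. exact: cs_starM. Qed.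
Lemma stK (x : car A) : st (st x) = x. Proof. exact: cs_starK. Qed.
Lemma stD (x y : car A) : st (x + y) = st x + st y. Proof. exact: cs_starD. Qed.
Lemma st0 : st (0 : car A) = 0.
Proof.
apply: (@addrI _ (st 0)); rewrite addr0 -stD addr0 //.
Qed.
Lemma stN (x : car A) : st (- x) = - st x.
Proof. by apply: (@addrI _ (st x)); rewrite -stD !subrr st0. Qed.
Lemma stB (x y : car A) : st (x - y) = st x - st y.
Proof. by rewrite stD stN. Qed.

Lemma norm0 : @cs_norm A (0 : car A) = R0.
Proof.
have hz : forall y : car A, (cs_scal C0 y : car A) = 0.
  move=> y; have e : Cadd C0 C0 = C0 by rewrite /Cadd /C0 /= Rplus_0_l.
  have h2 := cs_scalDl C0 C0 y; rewrite e in h2.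
  have h3 : (cs_scal C0 y : car A) = (cs_scal C0 y : car A) + cs_scal C0 y := h2.
  by apply: (@addrI _ (cs_scal C0 y : car A)); rewrite addr0 -h3.
rewrite -(hz 0) cs_normZ /Cmod /C0 /= Rmult_0_l Rplus_0_l sqrt_0 Rmult_0_l //.
Qed.

Lemma mulst_eq0 (x : car A) : x * st x = 0 -> x = 0.
Proof.
move=> h.
have h1 : @cs_norm A (x * st x) = Rmult (@cs_norm A (st x)) (@cs_norm A (st x)).
  have := cs_cstar (st x); rewrite /st cs_starK => hh; exact hh.
rewrite h norm0 in h1.
have h2 : @cs_norm A (st x) = R0 by case: (Rmult_integral _ _ (esym h1)).
have h3 : st x = 0 := cs_norm_eq0 h2.
by rewrite -(stK x) h3 st0.
Qed.
End Star.

Section Magic.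
Variables (d : nat) (A : CStarAlgebra).
Local Notation V := (hamming_vertex d 3).
Local Notation E := (hamming_adj d 3).

Definition QR (u : V -> V -> car A) := qaut_relations E u.

Lemma QR_T u : QR u -> QR (fun i j => u j i).
Proof.
case=> h1 [h2 h3]; split; [|split].
- by move=> i j; apply: h1.
- by move=> i; case: (h2 i).
- by move=> i j k l H; case: (h3 j i l k); first by rewrite addbC.
Qed.

Variables (u : V -> V -> car A) (hu : QR u).

Lemma idem i j : u i j * u i j = u i j.
Proof. by case: hu => h1 _; case: (h1 i j). Qed.
Lemma sa i j : st (u i j) = u i j.
Proof. by case: hu => h1 _; case: (h1 i j). Qed.
Lemma rowsum i : \sum_(t : V) u i t = 1.
Proof. by case: hu => _ [h2 _]; case: (h2 i). Qed.
Lemma colsum j : \sum_(t : V) u t j = 1.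
Proof. by case: hu => _ [h2 _]; case: (h2 j). Qed.
Lemma r3 i j k l : E i k (+) E j l -> u i j * u k l = 0.
Proof. by case: hu => _ [_ h3] H; case: (h3 i j k l H). Qed.
Lemma r3' i j k l : E i k (+) E j l -> u k l * u i j = 0.
Proof. by case: hu => _ [_ h3] H; case: (h3 i j k l H). Qed.
Lemma r3a i j k l : E i k -> ~~ E j l -> u i j * u k l = 0.
Proof. by move=> h1 h2; apply: r3; rewrite h1 (negbTE h2). Qed.

Lemma ins_row p (x y : car A) : x * y = \sum_(t : V) x * u p t * y.
Proof. by rewrite -{1}(mulr1 x) -(rowsum p) mulr_sumr mulr_suml. Qed.
Lemma ins_col q (x y : car A) : x * y = \sum_(t : V) x * u t q * y.
Proof. by rewrite -{1}(mulr1 x) -(colsum q) mulr_sumr mulr_suml. Qed.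

Lemma orth i j l : j != l -> u i j * u i l = 0.
Proof.
move=> hjl; have [t ht] := nb_separate hjl.
rewrite (ins_col t) big1 // => k _.
case e: (E i k (+) E j t).
  by rewrite (r3 e) mul0r.
have e2 : E k i (+) E t l.
  move: e ht; rewrite adj_sym (adj_sym t l).
  by case: (E k i); case: (E j t); case: (E l t).
by rewrite -mulrA (r3 e2) mulr0.
Qed.

Lemma dp_row n : forall i k j l, hdist i k = n -> (n < hdist j l)%N -> u i j * u k l = 0.
Proof.
elim: n => [|n IH] i k j l hik hjl.
  have -> : i = k by apply: dist0.
  by apply: orth; apply/negP => /eqP e; move: hjl; rewrite e hdist_xx.
have [p [hip hpk]] := geodesic hik.
rewrite (ins_row p) big1 // => t _.
case: (boolP (E j t)) => hjt.
  rewrite -mulrA (IH p k t l hpk) ?mulr0 //.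
  have := adj_hdist_le l (hjt : E j t); rewrite adj_sym in hjt.
  have := adj_hdist_le l hjt; lia.
by rewrite (r3a hip hjt) mul0r.
Qed.
End Magic.

Section Magic2.
Variables (d : nat) (A : CStarAlgebra).
Local Notation V := (hamming_vertex d 3).
Local Notation E := (hamming_adj d 3).
Variables (u : V -> V -> car A) (hu : QR u).

Lemma dp i k j l : hdist i k != hdist j l -> u i j * u k l = 0.
Proof.
case: ltngtP => // h _.
  exact: (dp_row hu (erefl _) h).
exact: (dp_row (QR_T hu) (erefl _) h).
Qed.

Lemma orth_col i k j : i != k -> u i j * u k j = 0.
Proof. by move=> h; exact: (orth (QR_T hu) j h). Qed.
End Magic2.

Section Main.
Variables (d : nat) (A : CStarAlgebra).
Local Notation V := (hamming_vertex d 3).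
Local Notation E := (hamming_adj d 3).
Variables (u : V -> V -> car A) (hu : QR u).

Lemma comm_of (a b : car A) : st a = a -> st b = b -> a * b = a * b * a -> a * b = b * a.
Proof.
move=> ha hb h.
have h2 : st (a * b) = st (a * b * a) by rewrite -h.
rewrite !stM ha hb mulrA in h2.
by rewrite {1}h -h2.
Qed.

Lemma absorb i j (x : car A) : (forall s, s != j -> x * u i s = 0) -> x = x * u i j.
Proof.
move=> h; rewrite -{1}(mulr1 x) -(rowsum hu i) mulr_sumr (bigD1 j) //= big1 ?addr0 //.
Qed.

Lemma idemL i j (x : car A) : u i j * (u i j * x) = u i j * x.
Proof. by rewrite mulrA idem. Qed.

Lemma comm3 (y a b c : car A) : y * a = a * y -> y * b = b * y -> y * c = c * y ->
  y * (a * b * c) = a * b * c * y.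
Proof.
move=> ha hb hc.
by rewrite !mulrA ha -!(mulrA a) hb !mulrA -(mulrA (a * b)) hc mulrA.
Qed.

Lemma hdist_adj x y : E x y -> hdist x y = 1%N.
Proof. by rewrite adjE => /eqP. Qed.

Lemma comm_all m : forall i k j l, hdist i k = m -> u i j * u k l = u k l * u i j.
Proof.
elim/ltn_ind: m => m IH i k j l hik.
case: (eqVneq (hdist j l) m) => hjl; last first.
  rewrite (dp hu (i:=i) (k:=k)); last by rewrite hik eq_sym.
  rewrite (dp hu (i:=k) (k:=i)) //.
  by rewrite hdist_sym hik hdist_sym eq_sym.
set a := u i j; set b := u k l.
have sa_ : st a = a by apply: sa.
have sb_ : st b = b by apply: sa.
case: m IH hik hjl => [|[|m]] IH hik hjl.
-
  by rewrite /a /b (dist0 hik) (dist0 hjl).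
-
  have Eik : E i k by rewrite adjE hik.
  have Ejl : E j l by rewrite adjE hjl.
  have [p [Eip Ekp]] := common_nb Eik.
  have [q [Ejq Elq]] := common_nb Ejl.
  set c := u p q.
  have F1 : b * (c * a) = b * a.
    rewrite mulrA [RHS](ins_row hu p) (bigD1 q) //= big1 ?addr0 // => t htq.
    case: (boolP (E l t)) => hlt; last by rewrite (r3a hu Ekp hlt) mul0r.
    case: (boolP (E t j)) => htj; last first.
      by rewrite -mulrA (r3a hu _ htj) ?mulr0 // adj_sym.
    exfalso; move/negP: htq; apply; apply/eqP.
    apply: (ucn Ejl htj); first by rewrite adj_sym.
      by rewrite adj_sym.
    by rewrite adj_sym.
  have F2 : c * (b * a) = c * a.
    rewrite mulrA [RHS](ins_row hu k) (bigD1 l) //= big1 ?addr0 // => w hwl.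
    case: (boolP (E q w)) => hqw; last by rewrite (r3a hu _ hqw) ?mul0r // adj_sym.
    case: (boolP (E w j)) => hwj; last first.
      by rewrite -mulrA (r3a hu _ hwj) ?mulr0 // adj_sym.
    exfalso; move/negP: hwl; apply; apply/eqP.
    apply: (ucn Ejq hwj); first by rewrite adj_sym.
      by rewrite adj_sym.
    by [].
  have sc_ : st c = c by apply: sa.
  have hY : (a * b - a * c) * st (a * b - a * c) = 0.
    rewrite stB !stM sa_ sb_ sc_ mulrBl !mulrBr -!mulrA.
    rewrite (idemL k l) F1 F2 (idemL p q).
    by rewrite -/b -/c !subrr.
  have hab : a * b = a * c by apply/eqP; rewrite -subr_eq0; apply/eqP/(mulst_eq0 hY).
  apply: comm_of => //.
  apply: absorb => s hsj.
  case: (boolP (E l s)) => hls; last first.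
    by rewrite -mulrA (r3a hu _ hls) ?mulr0 // adj_sym.
  rewrite hab.
  case: (boolP (E q s)) => hqs; last first.
    by rewrite -mulrA (r3a hu _ hqs) ?mulr0 // adj_sym.
  suff es : s = j by move: hsj; rewrite es eqxx.
  apply: (ucn Elq) => //; by rewrite adj_sym.
-
  set M := m.+2.
  have C : forall x z y w, (hdist x z < M)%N -> u x y * u z w = u z w * u x y.
    by move=> x z y w h; exact: (IH _ h x z y w erefl).
  have [p1 [p2 [Eip1 Eip2 hp1k hp2k hp12]]] := two_steps hik (isT : (2 <= M)%N).
  apply: comm_of => //.
  apply: absorb => s hsj.
  case: (eqVneq (hdist l s) M) => hls; last first.
    rewrite -mulrA (dp hu (i:=k) (k:=i)) ?mulr0 //.
    by rewrite hdist_sym hik eq_sym.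
  set X := a * b * u i s.
  have Cp : forall p t, E i p -> hdist p k = M.-1 -> u p t * X = X * u p t.
    move=> p t Eip hpk; apply: comm3.
    - apply: C; rewrite hdist_sym (hdist_adj Eip) //.
    - apply: C; rewrite hpk //.
    - apply: C; rewrite hdist_sym (hdist_adj Eip) //.
  have V0 : forall p t, E i p -> hdist p k = M.-1 ->
      ~~ [&& E t j, E t s & hdist t l == M.-1] -> X * u p t = 0.
    move=> p t Eip hpk hn.
    case: (boolP (E t s)) => hts; last first.
      by rewrite /X -mulrA (r3a hu Eip) ?mulr0 // adj_sym.
    case: (boolP (E t j)) => htj; last first.
      by rewrite -Cp // /X !mulrA (r3a hu _ htj) ?mul0r // adj_sym.
    have htl : hdist t l != M.-1 by move: hn; rewrite htj hts.
    rewrite /X -mulrA -(C p i) ?mulrA; last by rewrite hdist_sym (hdist_adj Eip).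
    rewrite -(mulrA a) (dp hu (i:=k) (k:=p)) ?mulr0 ?mul0r //.
    by rewrite hdist_sym hpk hdist_sym eq_sym.
  rewrite -/X -[X]mulr1 -(rowsum hu p1) mulr_sumr big1 // => t _.
  rewrite -[X * u p1 t]mulr1 -(rowsum hu p2) mulr_sumr big1 // => t' _.
  case: (eqVneq (hdist t t') 2%N) => htt; last first.
    by rewrite -mulrA (dp hu (i:=p1) (k:=p2)) ?mulr0 // hp12 eq_sym.
  case: (boolP [&& E t j, E t s & hdist t l == M.-1]) => ht; last first.
    by rewrite (V0 p1 t) ?mul0r.
  case: (boolP [&& E t' j, E t' s & hdist t' l == M.-1]) => ht'; last first.
    by rewrite -(Cp p1 t) // -mulrA (V0 p2 t') ?mulr0.
  suff es : s = j by move: hsj; rewrite es eqxx.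
  case/and3P: ht => h1 h2 /eqP h3; case/and3P: ht' => h1' h2' /eqP h3'.
  apply: (CL hjl _ _ h1 h2 h1' h2' h3 h3' htt) => //.
  by rewrite hdist_sym.
Qed.
End Main.

Local Close Scope ring_scope.

Theorem theorem4p5 : forall d : nat, no_quantum_symmetry (hamming_adj d 3).
Proof.
move=> d A u hu i j k l.
exact: (@comm_all d A u hu (hdist i k) i k j l (erefl _)).
Qed.
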